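(* Let $\psi\in C^2((0,\infty))$ be concave with $\psi''(1)\neq0\neq\psi'(1)$, let $d>0$, and let $G=(V,E)$ be a finite graph satisfying $CD\psi(d,0)$. Then $G$ satisfies $CD\!\left(\frac{-\psi''(1)}{\psi'(1)^2}\,d,\,0\right)$.
   Context: A finite graph $G=(V,E)$: finite set $V$, irreflexive symmetric relation $E$; $v\sim w$ iff $(v,w)\in E$. $C(V)$: real functions on $V$; $C^+(V)$: positive ones. Laplacian $\Delta f(v)=\sum_{w\sim v}(f(w)-f(v))$. $\Gamma(f,g):=\frac12(\Delta(fg)-f\Delta g-g\Delta f)$, $\Gamma(f)=\Gamma(f,f)$, $\Gamma_2(f):=\frac12(\Delta\Gamma(f)-2\Gamma(f,\Delta f))$. $G$ satisfies $CD(d,0)$ if $\Gamma_2(f)\ge\frac1d(\Delta f)^2$ for all $f\in C(V)$. For $f\in C^+(V)$: $(\Delta^\psi f)(v):=\Delta\big[\psi\big(\tfrac{f}{f(v)}\big)\big](v)$; $(\Omega^\psi f)(v):=\Delta\Big[\psi'\big(\tfrac{f}{f(v)}\big)\cdot\tfrac{f}{f(v)}\cdot\big(\tfrac{\Delta f}{f}-\tfrac{(\Delta f)(v)}{f(v)}\big)\Big](v)$; $2\Gamma_2^\psi(f):=\Omega^\psi f+\frac{\Delta f\,\Delta^\psi f}{f}-\frac{\Delta(f\,\Delta^\psi f)}{f}$. $G$ satisfies $CD\psi(d,0)$ if $\Gamma_2^\psi(f)\ge\frac1d(\Delta^\psi f)^2$ for all $f\in C^+(V)$. *)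

(* Defs.v *)
From Stdlib Require Import Reals Lra List.
Open Scope R_scope.

(* A finite graph: vertex set V = {0,...,nV-1}, edge relation adj
   (irreflexive and symmetric on V).  Functions on V are nat -> R
   (values outside V are irrelevant). *)
Record graph := {
  nV : nat;
  adj : nat -> nat -> bool;
  adj_irrefl : forall v, (v < nV)%nat -> adj v v = false;
  adj_sym : forall v w, (v < nV)%nat -> (w < nV)%nat -> adj v w = adj w v
}.

Definition sumV (G : graph) (F : nat -> R) : R :=
  fold_right (fun w acc => F w + acc) 0 (seq 0 (nV G)).

Definition Lap (G : graph) (f : nat -> R) (v : nat) : R :=
  sumV G (fun w => if adj G v w then f w - f v else 0).

Definition Gam (G : graph) (f g : nat -> R) (v : nat) : R :=
  / 2 * (Lap G (fun w => f w * g w) v - f v * Lap G g v - g v * Lap G f v).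

Definition Gam1 (G : graph) (f : nat -> R) : nat -> R := Gam G f f.

Definition Gamma2 (G : graph) (f : nat -> R) (v : nat) : R :=
  / 2 * (Lap G (Gam1 G f) v - 2 * Gam G f (Lap G f) v).

Definition CD (G : graph) (d : R) : Prop :=
  forall (f : nat -> R) (v : nat), (v < nV G)%nat ->
    Gamma2 G f v >= / d * (Lap G f v) ^ 2.

Definition Lappsi (G : graph) (psi : R -> R) (f : nat -> R) (v : nat) : R :=
  Lap G (fun w => psi (f w / f v)) v.

Definition Omegapsi (G : graph) (dpsi : R -> R) (f : nat -> R) (v : nat) : R :=
  Lap G (fun w => dpsi (f w / f v) * (f w / f v) *
                  (Lap G f w / f w - Lap G f v / f v)) v.

Definition Gamma2psi (G : graph) (psi dpsi : R -> R) (f : nat -> R) (v : nat) : R :=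
  / 2 * (Omegapsi G dpsi f v
         + Lap G f v * Lappsi G psi f v / f v
         - Lap G (fun w => f w * Lappsi G psi f w) v / f v).

Definition CDpsi (G : graph) (psi dpsi : R -> R) (d : R) : Prop :=
  forall f : nat -> R, (forall w, (w < nV G)%nat -> 0 < f w) ->
  forall v, (v < nV G)%nat ->
    Gamma2psi G psi dpsi f v >= / d * (Lappsi G psi f v) ^ 2.

Definition C2_pos (psi dpsi ddpsi : R -> R) : Prop :=
  (forall x, 0 < x -> derivable_pt_lim psi x (dpsi x)) /\
  (forall x, 0 < x -> derivable_pt_lim dpsi x (ddpsi x)) /\
  (forall x, 0 < x -> continuity_pt ddpsi x).

Definition concave_pos (psi : R -> R) : Prop :=
  forall x y t, 0 < x -> 0 < y -> 0 <= t <= 1 ->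
    t * psi x + (1 - t) * psi y <= psi (t * x + (1 - t) * y).

(* Main.v *)
Require Import Defs.
From Stdlib Require Import Reals Lra Lia List.
Open Scope R_scope.

Lemma cont0_use (r : R -> R) : continuity_pt r 0 -> r 0 = 0 ->
  forall eps, 0 < eps -> exists alp, 0 < alp /\ forall x, Rabs x < alp -> Rabs (r x) < eps.
Proof.
  intros Hc H0 eps He. destruct (Hc eps He) as [alp [Ha Hx]].
  exists alp; split; [lra|]. intros x Hxa.
  destruct (Req_dec x 0) as [->|Hn]. rewrite H0, Rabs_R0; lra.
  specialize (Hx x). simpl in Hx. unfold R_dist in Hx. rewrite H0, !Rminus_0_r in Hx.
  apply Hx. split; [split; [exact I| auto] | exact Hxa].
Qed.

Lemma cont0_intro (r : R -> R) : r 0 = 0 ->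
  (forall eps, 0 < eps -> exists alp, 0 < alp /\ forall x, x <> 0 -> Rabs x < alp -> Rabs (r x) < eps) ->
  continuity_pt r 0.
Proof.
  intros H0 H eps He. destruct (H eps He) as [alp [Ha Hx]].
  exists alp; split; [lra|]. intros x [[_ Hn] Hxa]. simpl in *. unfold R_dist in *.
  rewrite H0, !Rminus_0_r in *. apply Hx; auto.
Qed.

Ltac cont := repeat first [ assumption
  | apply continuity_pt_plus | apply continuity_pt_minus | apply continuity_pt_mult
  | apply continuity_pt_opp
  | (apply continuity_pt_const; intros ? ?; reflexivity)
  | apply derivable_continuous_pt, derivable_pt_id ].

Definition T2 (F : R -> R) (a b c : R) : Prop :=
  exists r : R -> R, exists del : R, 0 < del /\ continuity_pt r 0 /\ r 0 = 0 /\
    forall e, Rabs e < del -> F e = a + b*e + c*e^2 + e^2 * r e.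

Definition T1 (F : R -> R) (a b : R) : Prop :=
  exists r : R -> R, exists del : R, 0 < del /\ continuity_pt r 0 /\ r 0 = 0 /\
    forall e, Rabs e < del -> F e = a + b*e + e * r e.

Lemma lt_min_l a b c : a < Rmin b c -> a < b.
Proof. intros H; eapply Rlt_le_trans; [exact H| apply Rmin_l]. Qed.
Lemma lt_min_r a b c : a < Rmin b c -> a < c.
Proof. intros H; eapply Rlt_le_trans; [exact H| apply Rmin_r]. Qed.

Lemma T2_eq F G a b c a' b' c' : T2 F a b c -> (forall e, F e = G e) ->
  a = a' -> b = b' -> c = c' -> T2 G a' b' c'.
Proof.
  intros [r [d [Hd [Hc [H0 H]]]]] HFG -> -> ->. exists r, d; repeat split; auto.
  intros e He; rewrite <- HFG; auto.
Qed.

Lemma T1_eq F G a b a' b' : T1 F a b -> (forall e, F e = G e) ->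
  a = a' -> b = b' -> T1 G a' b'.
Proof.
  intros [r [d [Hd [Hc [H0 H]]]]] HFG -> ->. exists r, d; repeat split; auto.
  intros e He; rewrite <- HFG; auto.
Qed.

Lemma T2_poly a b c : T2 (fun e => a + b*e + c*e^2) a b c.
Proof.
  exists (fun _ => 0), 1; repeat split; try lra. cont. intros; ring.
Qed.

Lemma T2_add F G a b c a' b' c' : T2 F a b c -> T2 G a' b' c' ->
  T2 (fun e => F e + G e) (a+a') (b+b') (c+c').
Proof.
  intros [r1 [d1 [Hd1 [Hc1 [H01 H1]]]]] [r2 [d2 [Hd2 [Hc2 [H02 H2]]]]].
  exists (fun e => r1 e + r2 e), (Rmin d1 d2); repeat split.
  apply Rmin_pos; auto. cont. rewrite H01, H02; ring.
  intros e He. rewrite H1, H2 by (eauto using lt_min_l, lt_min_r). ring.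
Qed.

Lemma T2_scal k F a b c : T2 F a b c -> T2 (fun e => k * F e) (k*a) (k*b) (k*c).
Proof.
  intros [r1 [d1 [Hd1 [Hc1 [H01 H1]]]]].
  exists (fun e => k * r1 e), d1; repeat split; auto. cont. rewrite H01; ring.
  intros e He. rewrite H1 by auto. ring.
Qed.

Lemma T2_mul F G a b c a' b' c' : T2 F a b c -> T2 G a' b' c' ->
  T2 (fun e => F e * G e) (a*a') (a*b'+b*a') (a*c'+b*b'+c*a').
Proof.
  intros [r1 [d1 [Hd1 [Hc1 [H01 H1]]]]] [r2 [d2 [Hd2 [Hc2 [H02 H2]]]]].
  exists (fun e => e*(b*c'+c*b') + e*e*(c*c') + (a+b*e+c*(e*e))*r2 e
             + (a'+b'*e+c'*(e*e))*r1 e + e*e*(r1 e * r2 e)), (Rmin d1 d2); repeat split.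
  apply Rmin_pos; auto. cont. rewrite H01, H02; ring.
  intros e He. rewrite H1, H2 by (eauto using lt_min_l, lt_min_r). ring.
Qed.

Lemma T2_T1 F a b c : T2 F a b c -> T1 F a b.
Proof.
  intros [r1 [d1 [Hd1 [Hc1 [H01 H1]]]]].
  exists (fun e => c*e + e * r1 e), d1; repeat split; auto. cont. rewrite H01; ring.
  intros e He. rewrite H1 by auto. ring.
Qed.

Lemma T1_mul F G a b a' b' : T1 F a b -> T1 G a' b' ->
  T1 (fun e => F e * G e) (a*a') (a*b'+b*a').
Proof.
  intros [r1 [d1 [Hd1 [Hc1 [H01 H1]]]]] [r2 [d2 [Hd2 [Hc2 [H02 H2]]]]].
  exists (fun e => b*b'*e + (a+b*e)*r2 e + (a'+b'*e)*r1 e + e*(r1 e * r2 e)), (Rmin d1 d2); repeat split.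
  apply Rmin_pos; auto. cont. rewrite H01, H02; ring.
  intros e He. rewrite H1, H2 by (eauto using lt_min_l, lt_min_r). ring.
Qed.

Lemma T1T2_mul F G a b b' c' : T1 F a b -> T2 G 0 b' c' ->
  T2 (fun e => F e * G e) 0 (a*b') (a*c'+b*b').
Proof.
  intros [r1 [d1 [Hd1 [Hc1 [H01 H1]]]]] [r2 [d2 [Hd2 [Hc2 [H02 H2]]]]].
  exists (fun e => a*r2 e + b*c'*e + b*e*r2 e + r1 e * (b' + c'*e + e*r2 e)), (Rmin d1 d2); repeat split.
  apply Rmin_pos; auto. cont. rewrite H01, H02; ring.
  intros e He. rewrite H1, H2 by (eauto using lt_min_l, lt_min_r). ring.
Qed.

Lemma T2_inv1 x : T2 (fun e => / (1 + e * x)) 1 (-x) (x^2).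
Proof.
  exists (fun e => - x^3 * e / (1 + e*x)), (/ (Rabs x + 1)); repeat split.
  apply Rinv_0_lt_compat; pose proof (Rabs_pos x); lra.
  apply continuity_pt_div; [cont|cont|cbv beta; lra].
  unfold Rdiv; ring.
  intros e He.
  assert (Hb : Rabs (e*x) < 1).
  { rewrite Rabs_mult. pose proof (Rabs_pos x). pose proof (Rabs_pos e).
    apply Rmult_lt_compat_r with (r := Rabs x + 1) in He; [|lra].
    rewrite Rinv_l in He by lra. nra. }
  assert (1 + e*x <> 0). { apply Rabs_def2 in Hb. lra. }
  field. auto.
Qed.

Lemma Lap_lin G w (F X1 X2 X3 X4 : nat -> R) k1 k2 k3 k4 k0 :
  (forall z, F z = k1 * X1 z + k2 * X2 z + k3 * X3 z + k4 * X4 z + k0) ->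
  Lap G F w = k1 * Lap G X1 w + k2 * Lap G X2 w + k3 * Lap G X3 w + k4 * Lap G X4 w.
Proof.
  intros HF. unfold Lap, sumV. induction (seq 0 (nV G)) as [|z l IH]; simpl.
  ring. rewrite IH, !HF. destruct (adj G w z); ring.
Qed.

Lemma T2_Lap G v (F : nat -> R -> R) A B C :
  (forall w, T2 (F w) (A w) (B w) (C w)) ->
  T2 (fun e => Lap G (fun w => F w e) v) (Lap G A v) (Lap G B v) (Lap G C v).
Proof.
  intros HF. unfold Lap, sumV. induction (seq 0 (nV G)) as [|z l IH]; simpl.
  - eapply T2_eq. apply (T2_poly 0 0 0). intros; simpl; ring. ring. ring. ring.
  - destruct (adj G v z).
    + eapply T2_eq. apply T2_add; [apply T2_add; [apply (HF z) | apply (T2_scal (-1)); apply (HF v)] | exact IH].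
      all: intros; cbv beta; try ring.
    + eapply T2_eq. apply T2_add; [apply (T2_poly 0 0 0) | exact IH].
      all: intros; cbv beta; try ring.
Qed.

Lemma dpl_val f x l l' : derivable_pt_lim f x l -> l = l' -> derivable_pt_lim f x l'.
Proof. intros H ->; exact H. Qed.

Lemma der_shift psi dpsi t : (forall x, 0 < x -> derivable_pt_lim psi x (dpsi x)) -> 0 < 1 + t ->
  derivable_pt_lim (fun s => psi (1 + s)) t (dpsi (1 + t)).
Proof.
  intros H Ht eps He. destruct (H (1+t) Ht eps He) as [del Hd]. exists del.
  intros h Hh Hhd. replace (1 + (t+h)) with (1+t+h) by ring. apply Hd; auto.
Qed.

Lemma der_phi psi dpsi a b t : (forall x, 0 < x -> derivable_pt_lim psi x (dpsi x)) -> 0 < 1 + t ->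
  derivable_pt_lim (fun s => psi (1 + s) - (a * s + b / 2 * (s * s))) t (dpsi (1+t) - a - b * t).
Proof.
  intros H Ht. eapply dpl_val. apply derivable_pt_lim_minus. apply der_shift; auto.
  apply derivable_pt_lim_plus. apply derivable_pt_lim_scal. apply derivable_pt_lim_id.
  apply derivable_pt_lim_scal. apply derivable_pt_lim_mult; apply derivable_pt_lim_id.
  unfold id. field.
Qed.

Lemma peano_bound psi dpsi ddpsi : C2_pos psi dpsi ddpsi ->
  forall eps, 0 < eps -> exists alp, 0 < alp /\ forall x, Rabs x < alp ->
   Rabs (psi (1+x) - (psi 1 + dpsi 1 * x + ddpsi 1 / 2 * x^2)) <= eps * x^2.
Proof.
  intros [H1 [H2 H3]] eps He.
  destruct (H2 1 ltac:(lra) eps He) as [del Hd].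
  exists (Rmin del (1/2)). split. apply Rmin_pos; [apply cond_pos|lra].
  intros x Hx. pose proof (lt_min_l _ _ _ Hx) as Hxd. pose proof (lt_min_r _ _ _ Hx) as Hx2.
  set (a := dpsi 1) in *. set (b := ddpsi 1) in *.
  set (f := fun s => psi (1 + s) - (a * s + b / 2 * (s * s))).
  set (f' := fun s => dpsi (1+s) - a - b * s).
  assert (Hf0 : f 0 = psi 1). { unfold f. rewrite Rplus_0_r. ring. }
  assert (Key : forall c, c <> 0 -> Rabs c < Rabs x -> Rabs (f' c) <= eps * Rabs c).
  { intros c Hc Hcx. unfold f'.
    assert (Hq := Hd c Hc ltac:(lra)). change (ddpsi 1) with b in Hq.
    replace (dpsi (1 + c) - a - b * c) with (c * ((dpsi (1 + c) - a) / c - b)) by (field; auto).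
    rewrite Rabs_mult. pose proof (Rabs_pos c). rewrite (Rmult_comm eps). apply Rmult_le_compat_l; lra. }
  assert (Hder : forall c, Rabs c < 1/2 -> derivable_pt_lim f c (f' c)).
  { intros c Hc. apply der_phi; auto. apply Rabs_def2 in Hc; lra. }
  replace (psi (1 + x) - (psi 1 + a * x + b / 2 * x ^ 2)) with (f x - f 0) by (rewrite Hf0; unfold f; ring).
  destruct (Rtotal_order x 0) as [Hn|[Hz|Hp]].
  - destruct (MVT_cor2 f f' x 0 Hn) as [c [Hc Hcb]].
    { intros c Hc. apply Hder. apply Rabs_def2 in Hx2; apply Rabs_def1; lra. }
    replace (f x - f 0) with (- (f 0 - f x)) by ring. rewrite Rabs_Ropp, Hc.
    rewrite Rabs_mult. assert (Hc0 : c <> 0) by lra.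
    assert (Hcx : Rabs c < Rabs x) by (rewrite !Rabs_left by lra; lra).
    pose proof (Key c Hc0 Hcx). pose proof (Rabs_pos c).
    replace (0 - x) with (- x) by ring. rewrite Rabs_Ropp.
    replace (x^2) with (Rabs x * Rabs x) by (rewrite <- Rabs_mult, Rabs_right; [ring| nra]).
    pose proof (Rabs_pos x). apply Rle_trans with (eps * Rabs c * Rabs x). apply Rmult_le_compat_r; lra. rewrite Rmult_assoc. apply Rmult_le_compat_l; [lra|]. apply Rmult_le_compat_r; lra.
  - subst x. replace (f 0 - f 0) with 0 by ring. rewrite Rabs_R0. nra.
  - destruct (MVT_cor2 f f' 0 x Hp) as [c [Hc Hcb]].
    { intros c Hc. apply Hder. apply Rabs_def1; apply Rabs_def2 in Hx2; lra. }
    rewrite Hc.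
    rewrite Rabs_mult. assert (Hc0 : c <> 0) by lra.
    assert (Hcx : Rabs c < Rabs x) by (rewrite !Rabs_right by lra; lra).
    pose proof (Key c Hc0 Hcx). pose proof (Rabs_pos c).
    replace (Rabs (x - 0)) with (Rabs x) by (f_equal; ring).
    replace (x^2) with (Rabs x * Rabs x) by (rewrite <- Rabs_mult, Rabs_right; [ring| nra]).
    pose proof (Rabs_pos x). apply Rle_trans with (eps * Rabs c * Rabs x). apply Rmult_le_compat_r; lra. rewrite Rmult_assoc. apply Rmult_le_compat_l; [lra|]. apply Rmult_le_compat_r; lra.
Qed.

Lemma peano psi dpsi ddpsi : C2_pos psi dpsi ddpsi ->
  T2 (fun x => psi (1+x)) (psi 1) (dpsi 1) (ddpsi 1 / 2).
Proof.
  intros HC.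
  set (rho := fun x => if Req_EM_T x 0 then 0 else
       (psi (1+x) - (psi 1 + dpsi 1 * x + ddpsi 1 / 2 * x^2)) / x^2).
  assert (Hr0 : rho 0 = 0). { unfold rho. destruct (Req_EM_T 0 0); [reflexivity|contradiction]. }
  exists rho, 1. repeat split; try lra; auto.
  - apply cont0_intro; auto. intros eps He.
    destruct (peano_bound _ _ _ HC (eps/2) ltac:(lra)) as [alp [Ha Hb]].
    exists alp; split; auto. intros x Hx Hxa. unfold rho.
    destruct (Req_EM_T x 0); [contradiction|].
    assert (Hx2 : 0 < x^2) by (apply pow_lt_1_compat || nra).
    unfold Rdiv. rewrite Rabs_mult, (Rabs_right (/ x^2)) by (left; apply Rinv_0_lt_compat; auto).
    specialize (Hb x Hxa).
    apply Rle_lt_trans with (eps / 2 * x^2 * / x^2).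
    apply Rmult_le_compat_r; [left; apply Rinv_0_lt_compat; auto | auto].
    field_simplify; lra.
  - intros x Hx. unfold rho. destruct (Req_EM_T x 0) as [->|Hn].
    rewrite Rplus_0_r; ring. field. auto.
Qed.

Lemma T2_psi_comp psi dpsi ddpsi R p q : C2_pos psi dpsi ddpsi -> T2 R 1 p q ->
  T2 (fun e => psi (R e)) (psi 1) (dpsi 1 * p) (dpsi 1 * q + ddpsi 1 / 2 * p^2).
Proof.
  intros HC [r [d [Hd [Hc [H0 H]]]]].
  destruct (peano _ _ _ HC) as [rho [dp [Hdp [Hcr [Hr0 Hrho]]]]].
  set (a := dpsi 1) in *. set (b := ddpsi 1) in *.
  pose (s := fun e => p + q*e + e * r e).
  pose (X := fun e => e * s e).
  assert (Hs : continuity_pt s 0) by (unfold s; cont).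
  assert (HX : continuity_pt X 0) by (unfold X; cont).
  assert (HX0 : X 0 = 0) by (unfold X; ring).
  assert (HrX : continuity_pt (fun e => rho (X e)) 0).
  { change (continuity_pt (comp rho X) 0). apply continuity_pt_comp; auto. rewrite HX0; auto. }
  destruct (cont0_use X HX HX0 dp Hdp) as [al [Hal HXa]].
  exists (fun e => a * r e + b/2 * (s e * s e - p*p) + s e * s e * rho (X e)), (Rmin d al).
  repeat split. apply Rmin_pos; auto. cont.
  cbv beta. rewrite HX0, Hr0, H0. unfold s. rewrite H0. ring.
  intros e He. rewrite H by (eauto using lt_min_l).
  replace (1 + p * e + q * e ^ 2 + e ^ 2 * r e) with (1 + X e) by (unfold X, s; ring).
  rewrite Hrho by (apply HXa; eauto using lt_min_r).
  unfold X, s. ring.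
Qed.

Lemma T1_dpsi_comp psi dpsi ddpsi R p : C2_pos psi dpsi ddpsi -> T1 R 1 p ->
  T1 (fun e => dpsi (R e)) (dpsi 1) (ddpsi 1 * p).
Proof.
  intros [_ [H2 _]] [r [d [Hd [Hc [H0 H]]]]].
  set (a := dpsi 1) in *. set (b := ddpsi 1) in *.
  set (sig := fun x => if Req_EM_T x 0 then 0 else (dpsi (1+x) - a)/x - b).
  assert (Hs0 : sig 0 = 0). { unfold sig. destruct (Req_EM_T 0 0); [reflexivity|contradiction]. }
  assert (Hsc : continuity_pt sig 0).
  { apply cont0_intro; auto. intros eps He. destruct (H2 1 ltac:(lra) eps He) as [del Hdel].
    exists del; split; [apply cond_pos|]. intros x Hx Hxa. unfold sig.
    destruct (Req_EM_T x 0); [contradiction|]. apply Hdel; auto. }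
  assert (Hsig : forall x, dpsi (1+x) = a + b*x + x * sig x).
  { intros x. unfold sig. destruct (Req_EM_T x 0) as [->|Hn].
    rewrite Rplus_0_r; unfold a; ring. field. auto. }
  pose (s := fun e => p + r e).
  pose (X := fun e => e * s e).
  assert (Hs : continuity_pt s 0) by (unfold s; cont).
  assert (HX : continuity_pt X 0) by (unfold X; cont).
  assert (HX0 : X 0 = 0) by (unfold X; ring).
  assert (HrX : continuity_pt (fun e => sig (X e)) 0).
  { change (continuity_pt (comp sig X) 0). apply continuity_pt_comp; auto. rewrite HX0; auto. }
  exists (fun e => b * r e + s e * sig (X e)), d.
  repeat split; auto. cont.
  cbv beta. rewrite HX0, Hs0, H0. ring.
  intros e He. rewrite H by auto.
  replace (1 + p * e + e * r e) with (1 + X e) by (unfold X, s; ring).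
  rewrite Hsig. unfold X, s. ring.
Qed.

Definition fe (g : nat -> R) (e : R) : nat -> R := fun w => 1 + e * g w.

Section Exp.
Variables (psi dpsi ddpsi : R -> R) (G : graph) (g : nat -> R).
Hypothesis HC : C2_pos psi dpsi ddpsi.
Let a := dpsi 1.
Let b := ddpsi 1.
Let Lg := Lap G g.

Lemma L1 w z : T2 (fun e => fe g e z / fe g e w) 1 (g z - g w) (- g w * (g z - g w)).
Proof.
  eapply T2_eq. apply T2_mul. apply (T2_poly 1 (g z) 0). apply (T2_inv1 (g w)).
  intros; unfold fe, Rdiv; f_equal; ring. ring. ring. ring.
Qed.

Lemma L2 w z : T2 (fun e => psi (fe g e z / fe g e w)) (psi 1) (a * (g z - g w))
   (a * (- g w * (g z - g w)) + b / 2 * (g z - g w)^2).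
Proof. apply (T2_psi_comp psi dpsi ddpsi); auto. apply L1. Qed.

Lemma L3 w : T2 (fun e => Lappsi G psi (fe g e) w) 0 (a * Lg w) (- a * g w * Lg w + b * Gam1 G g w).
Proof.
  eapply T2_eq. apply (T2_Lap G w (fun z e => psi (fe g e z / fe g e w))). intros z; apply L2.
  intros; reflexivity.
  rewrite (Lap_lin G w _ g g g g 0 0 0 0 (psi 1)) by (intros; cbv beta; ring). ring.
  rewrite (Lap_lin G w _ g g g g a 0 0 0 (- a * g w)) by (intros; cbv beta; ring). unfold Lg. ring.
  rewrite (Lap_lin G w _ (fun z => g z * g z) g g g (b/2) (- a * g w - b * g w) 0 0
     (a * g w ^2 + b / 2 * g w ^ 2)) by (intros; cbv beta; field).
  unfold Gam1, Gam, Lg. field.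
Qed.

Lemma Lap_fe e w : Lap G (fe g e) w = e * Lg w.
Proof. rewrite (Lap_lin G w _ g g g g e 0 0 0 1) by (intros; unfold fe; ring). unfold Lg; ring. Qed.

Lemma L4 w : T2 (fun e => Lap G (fe g e) w / fe g e w) 0 (Lg w) (- g w * Lg w).
Proof.
  eapply T2_eq. apply T2_mul. apply (T2_poly 0 (Lg w) 0). apply (T2_inv1 (g w)).
  intros; rewrite Lap_fe; unfold fe, Rdiv; f_equal; ring. ring. ring. ring.
Qed.

Lemma L5 v w : T2 (fun e => dpsi (fe g e w / fe g e v) * (fe g e w / fe g e v) *
     (Lap G (fe g e) w / fe g e w - Lap G (fe g e) v / fe g e v)) 0 (a * (Lg w - Lg v))
     (a * (- g w * Lg w + g v * Lg v) + (a + b) * (g w - g v) * (Lg w - Lg v)).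
Proof.
  assert (H1 := T1_dpsi_comp psi dpsi ddpsi _ _ HC (T2_T1 _ _ _ _ (L1 v w))).
  assert (H2 := T1_mul _ _ _ _ _ _ H1 (T2_T1 _ _ _ _ (L1 v w))).
  assert (H3 := T2_add _ _ _ _ _ _ _ _ (L4 w) (T2_scal (-1) _ _ _ _ (L4 v))).
  assert (H3' : T2 (fun e => Lap G (fe g e) w / fe g e w - Lap G (fe g e) v / fe g e v)
      0 (Lg w - Lg v) (- g w * Lg w + g v * Lg v)).
  { eapply T2_eq. exact H3. intros; cbv beta; ring. ring. ring. ring. }
  eapply T2_eq. apply (T1T2_mul _ _ _ _ _ _ H2 H3'). intros; reflexivity. ring.
  fold a b. ring. fold a b. ring.
Qed.

Lemma LOm v : T2 (fun e => Omegapsi G dpsi (fe g e) v) 0 (a * Lap G Lg v)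
  (b * Lap G (fun w => g w * Lg w) v - (a+b) * g v * Lap G Lg v - (a+b) * Lg v * Lg v).
Proof.
  eapply T2_eq. apply (T2_Lap G v (fun w e => dpsi (fe g e w / fe g e v) * (fe g e w / fe g e v) *
     (Lap G (fe g e) w / fe g e w - Lap G (fe g e) v / fe g e v))). intros w; apply L5.
  intros; reflexivity.
  rewrite (Lap_lin G v _ g g g g 0 0 0 0 0) by (intros; cbv beta; ring). ring.
  rewrite (Lap_lin G v _ Lg g g g a 0 0 0 (- a * Lg v)) by (intros; cbv beta; ring). ring.
  rewrite (Lap_lin G v _ (fun w => g w * Lg w) Lg g g b (-(a+b) * g v) (-(a+b) * Lg v) 0
     (a * g v * Lg v + (a+b) * g v * Lg v)) by (intros; cbv beta; field). unfold Lg; ring.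
Qed.

Lemma LB v : T2 (fun e => Lap G (fe g e) v * Lappsi G psi (fe g e) v / fe g e v) 0 0 (a * Lg v * Lg v).
Proof.
  eapply T2_eq. apply T2_mul. apply T2_mul. apply (T2_poly 0 (Lg v) 0). apply (L3 v). apply (T2_inv1 (g v)).
  intros; cbv beta; rewrite Lap_fe; unfold fe, Rdiv; ring. ring. ring. ring.
Qed.

Lemma LC v : T2 (fun e => Lap G (fun w => fe g e w * Lappsi G psi (fe g e) w) v / fe g e v) 0
   (a * Lap G Lg v) (b * Lap G (Gam1 G g) v - g v * a * Lap G Lg v).
Proof.
  assert (H : T2 (fun e => Lap G (fun w => fe g e w * Lappsi G psi (fe g e) w) v) 0
                 (a * Lap G Lg v) (b * Lap G (Gam1 G g) v)).
  { eapply T2_eq. apply (T2_Lap G v (fun w e => fe g e w * Lappsi G psi (fe g e) w)).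
    intros w. eapply T2_eq. apply T2_mul. apply (T2_poly 1 (g w) 0). apply (L3 w).
    intros; unfold fe; cbv beta; ring. reflexivity. reflexivity. reflexivity.
    intros; reflexivity.
    rewrite (Lap_lin G v _ g g g g 0 0 0 0 0) by (intros; cbv beta; ring). ring.
    rewrite (Lap_lin G v _ Lg g g g a 0 0 0 0) by (intros; cbv beta; ring). ring.
    rewrite (Lap_lin G v _ (Gam1 G g) g g g b 0 0 0 0) by (intros; cbv beta; field). ring. }
  eapply T2_eq. apply T2_mul. exact H. apply (T2_inv1 (g v)).
  intros; cbv beta; unfold fe, Rdiv; ring. ring. ring. ring.
Qed.

Lemma LG2 v : T2 (fun e => Gamma2psi G psi dpsi (fe g e) v) 0 0 (- b * Gamma2 G g v).
Proof.
  eapply T2_eq. apply (T2_scal (/2)). apply T2_add. apply T2_add. apply (LOm v). apply (LB v).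
  apply (T2_scal (-1)). apply (LC v).
  intros; cbv beta; unfold Gamma2psi; ring. ring. ring.
  unfold Gamma2, Gam, Lg. field.
Qed.

Lemma Lh d v : T2 (fun e => Gamma2psi G psi dpsi (fe g e) v - / d * (Lappsi G psi (fe g e) v)^2) 0 0
  (- b * Gamma2 G g v - / d * (a * Lg v)^2).
Proof.
  eapply T2_eq. apply T2_add. apply (LG2 v). apply (T2_scal (- / d)). apply T2_mul; apply (L3 v).
  intros; cbv beta; ring. ring. ring. ring.
Qed.

End Exp.

Lemma bound_g (g : nat -> R) (n : nat) : exists M, 0 < M /\ forall w, (w < n)%nat -> Rabs (g w) <= M.
Proof.
  induction n as [|n [M [HM H]]].
  - exists 1; split; [lra|]. intros; lia.
  - exists (M + Rabs (g n)). pose proof (Rabs_pos (g n)). split; [lra|].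
    intros w Hw. destruct (Nat.eq_dec w n) as [->|Hn]. lra.
    assert (w < n)%nat by lia. specialize (H w H1). lra.
Qed.

Lemma limit_nonneg h K : T2 h 0 0 K -> (exists del, 0 < del /\ forall e, Rabs e < del -> h e >= 0) -> K >= 0.
Proof.
  intros [r [d1 [Hd1 [Hc [H0 H]]]]] [d2 [Hd2 Hh]].
  destruct (Rlt_or_le K 0) as [HK|HK]; [|lra]. exfalso.
  destruct (cont0_use r Hc H0 (-K/2) ltac:(lra)) as [al [Hal Hr]].
  set (e := Rmin (Rmin d1 d2) al / 2).
  assert (Hm : 0 < Rmin (Rmin d1 d2) al) by (repeat apply Rmin_pos; auto).
  assert (He : 0 < e) by (unfold e; lra).
  assert (Hlt : Rabs e < Rmin (Rmin d1 d2) al) by (rewrite Rabs_right by lra; unfold e; lra).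
  pose proof (Hh e (lt_min_r _ _ _ (lt_min_l _ _ _ Hlt))).
  rewrite H in H1 by (exact (lt_min_l _ _ _ (lt_min_l _ _ _ Hlt))).
  pose proof (Hr e (lt_min_r _ _ _ Hlt)). apply Rabs_def2 in H2.
  assert (0 < e^2) by nra. nra.
Qed.

Lemma concave_neg psi dpsi ddpsi : C2_pos psi dpsi ddpsi -> concave_pos psi -> ddpsi 1 <= 0.
Proof.
  intros HC Hcv.
  destruct (peano _ _ _ HC) as [rho [dp [Hdp [Hcr [Hr0 Hrho]]]]].
  destruct (Rle_or_lt (ddpsi 1) 0) as [Hb|Hb]; [exact Hb|]. exfalso.
  destruct (cont0_use rho Hcr Hr0 (ddpsi 1 / 2) ltac:(lra)) as [al [Hal Hr]].
  set (h := Rmin (Rmin dp 1) al / 2).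
  assert (Hm : 0 < Rmin (Rmin dp 1) al) by (repeat apply Rmin_pos; auto; lra).
  assert (Hh : 0 < h) by (unfold h; lra).
  assert (Hlt : h < Rmin (Rmin dp 1) al) by (unfold h; lra).
  assert (Hlt1 : h < 1) by (eapply lt_min_r, lt_min_l; eauto).
  assert (Hltd : h < dp) by (eapply lt_min_l, lt_min_l; eauto).
  assert (Hlta : h < al) by (eapply lt_min_r; eauto).
  assert (Ha1 : Rabs h < dp) by (rewrite Rabs_right; lra).
  assert (Ha2 : Rabs (-h) < dp) by (rewrite Rabs_Ropp, Rabs_right; lra).
  pose proof (Hcv (1 + h) (1 + - h) (/2) ltac:(lra) ltac:(lra) ltac:(lra)) as Hc.
  replace (/ 2 * (1 + h) + (1 - / 2) * (1 + - h)) with (1 + 0) in Hc by field.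
  rewrite (Hrho h Ha1), (Hrho (-h) Ha2) in Hc.
  rewrite (Hrho 0) in Hc by (rewrite Rabs_R0; lra). rewrite Hr0 in Hc.
  pose proof (Hr h ltac:(rewrite Rabs_right; lra)) as H1.
  pose proof (Hr (-h) ltac:(rewrite Rabs_Ropp, Rabs_right; lra)) as H2.
  apply Rabs_def2 in H1. apply Rabs_def2 in H2.
  assert (0 < h^2) by nra.
  assert (h^2 * (ddpsi 1 / 2 + (rho h + rho (-h)) / 2) <= 0) by nra.
  nra.
Qed.

Theorem mainTheorem6 (psi dpsi ddpsi : R -> R) (d : R) (G : graph) :
  C2_pos psi dpsi ddpsi ->
  concave_pos psi ->
  ddpsi 1 <> 0 -> dpsi 1 <> 0 ->
  0 < d ->
  CDpsi G psi dpsi d ->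
  CD G (- ddpsi 1 / (dpsi 1) ^ 2 * d).
Proof.
  intros HC Hcv Hb Ha Hd Hpsi g v Hv.
  assert (Hbn : ddpsi 1 < 0) by (pose proof (concave_neg _ _ _ HC Hcv); lra).
  assert (HK : - ddpsi 1 * Gamma2 G g v - / d * (dpsi 1 * Lap G g v)^2 >= 0).
  { apply (limit_nonneg _ _ (Lh psi dpsi ddpsi G g HC d v)).
    destruct (bound_g g (nV G)) as [M [HM HgM]].
    exists (/ M). split. apply Rinv_0_lt_compat; auto.
    intros e He.
    assert (Hpos : forall w, (w < nV G)%nat -> 0 < fe g e w).
    { intros w Hw. unfold fe. specialize (HgM w Hw).
      assert (Rabs (e * g w) < 1).
      { rewrite Rabs_mult. pose proof (Rabs_pos e). pose proof (Rabs_pos (g w)).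
        apply Rmult_lt_compat_r with (r := M) in He; auto. rewrite Rinv_l in He by lra. nra. }
      apply Rabs_def2 in H. lra. }
    pose proof (Hpsi (fe g e) Hpos v Hv). lra. }
  set (a := dpsi 1) in *. set (b := ddpsi 1) in *.
  set (L := Lap G g v) in *. set (X := / d * (a * L)^2) in *.
  assert (Hrw : / (- b / a ^ 2 * d) * L ^ 2 = X * / (- b)).
  { unfold X. field. repeat split; lra || auto. }
  rewrite Hrw. apply Rle_ge.
  replace (Gamma2 G g v) with ((- b * Gamma2 G g v) * / (- b)) by (field; lra).
  apply Rmult_le_compat_r. left; apply Rinv_0_lt_compat; lra. lra.
Qed.
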